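(* Fix a multi-time quantum process except for the channel at one time step $t_j$, and fix all measurements. For CPTP maps $\mathcal{E}_{t_j\leftarrow t_{j-1}}$ and $\mathcal{K}_{t_j\leftarrow t_{j-1}}$ from $t_{j-1}$ to $t_j$ and $\lambda\in[0,1]$, writing $\overrightarrow{Q}_{\rm KD}[\mathcal{F}]$ for the right temporal KD distribution of the process whose channel at step $t_j$ is $\mathcal{F}$, $$\mathcal{N}\big[\overrightarrow{Q}_{\rm KD}[\lambda\mathcal{E}_{t_j\leftarrow t_{j-1}}+(1-\lambda)\mathcal{K}_{t_j\leftarrow t_{j-1}}]\big]\le\lambda\,\mathcal{N}\big[\overrightarrow{Q}_{\rm KD}[\mathcal{E}_{t_j\leftarrow t_{j-1}}]\big]+(1-\lambda)\,\mathcal{N}\big[\overrightarrow{Q}_{\rm KD}[\mathcal{K}_{t_j\leftarrow t_{j-1}}]\big].$$ The same holds for the left and doubled temporal KD distributions.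
   Context: A multi-time quantum process $(\rho_{t_0},\mathcal{E}_{t_1\leftarrow t_0},\dots,\mathcal{E}_{t_n\leftarrow t_{n-1}})$ consists of a density operator and CPTP maps on finite-dimensional spaces, extended linearly to all operators; complete families of orthogonal projectors are fixed at each time. $\overrightarrow{Q}_{\rm KD}(b_n,\dots,b_0)=\operatorname{Tr}[\mathcal{E}_{t_n\leftarrow t_{n-1}}(\cdots\mathcal{E}_{t_1\leftarrow t_0}(\rho_{t_0}\Pi^{t_0}_{b_0})\Pi^{t_1}_{b_1}\cdots)\Pi^{t_n}_{b_n}]$; $\overleftarrow{Q}_{\rm KD}(a_n,\dots,a_0)=\operatorname{Tr}[\Pi^{t_n}_{a_n}\mathcal{E}_{t_n\leftarrow t_{n-1}}(\cdots\Pi^{t_1}_{a_1}\mathcal{E}_{t_1\leftarrow t_0}(\Pi^{t_0}_{a_0}\rho_{t_0})\cdots)]$; $\overleftrightarrow{Q}_{\rm KD}(a;b)=\operatorname{Tr}[\Pi^{t_n}_{a_n}\mathcal{E}_{t_n\leftarrow t_{n-1}}(\cdots\Pi^{t_1}_{a_1}\mathcal{E}_{t_1\leftarrow t_0}(\Pi^{t_0}_{a_0}\rho_{t_0}\Pi^{t_0}_{b_0})\Pi^{t_1}_{b_1}\cdots)\Pi^{t_n}_{b_n}]$. For any such distribution $Q$, $\mathcal{N}[Q]=\sum_{\text{all outcomes}}|Q|-1$. *)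

(* Defs.v *)
From HB Require Import structures.
From mathcomp Require Import all_boot all_order all_algebra all_field.
Set Implicit Arguments. Unset Strict Implicit. Unset Printing Implicit Defensive.
Import Order.TTheory GRing.Theory Num.Theory.
Local Open Scope ring_scope.

Definition psd_fun (T : finType) (X : T -> T -> algC) : Prop :=
  (forall p q, X q p = (X p q)^*) /\
  (forall v : T -> algC, 0 <= \sum_(p : T) \sum_(q : T) (v p)^* * X p q * v q).

Definition psdmx (m : nat) (X : 'M[algC]_m) : Prop := psd_fun (fun i j => X i j).

(* Ampliation id_k (x) E acting on operators on C^k (x) C^m. *)
Definition ampl (k m m' : nat) (E : 'M[algC]_m -> 'M[algC]_m')
  (X : 'I_k * 'I_m -> 'I_k * 'I_m -> algC) : 'I_k * 'I_m' -> 'I_k * 'I_m' -> algC :=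
  fun p q => E (\matrix_(a, b) X (p.1, a) (q.1, b)) p.2 q.2.

Definition completely_positive (m m' : nat) (E : 'M[algC]_m -> 'M[algC]_m') : Prop :=
  forall (k : nat) (X : 'I_k * 'I_m -> 'I_k * 'I_m -> algC),
    psd_fun X -> psd_fun (ampl E X).

Definition trace_preserving (m m' : nat) (E : 'M[algC]_m -> 'M[algC]_m') : Prop :=
  forall X, \tr (E X) = \tr X.

Definition CPTP (m m' : nat) (E : 'M[algC]_m -> 'M[algC]_m') : Prop :=
  linear E /\ completely_positive E /\ trace_preserving E.

Definition density (m : nat) (rho : 'M[algC]_m) : Prop := psdmx rho /\ \tr rho = 1.

Definition adjmx (m : nat) (A : 'M[algC]_m) : 'M[algC]_m := map_mx (fun x : algC => x^*) A^T.

Definition complete_projectors (m : nat) (A : finType) (P : A -> 'M[algC]_m) : Prop :=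
  (forall a, adjmx (P a) = P a) /\
  (forall a b, P a *m P b = if a == b then P a else 0) /\
  (\sum_(a : A) P a = 1%:M).

(* A multi-time process with times t_0,...,t_n: dimension d k at time t_k,
   initial state rho, channels E k : t_{k-1} -> t_k (k = 1..n), outcome set A k
   and projectors Pi k at time t_k. *)
Section KD.
Variables (n : nat) (d : nat -> nat) (A : nat -> finType).
Variables (rho : 'M[algC]_(d 0)) (Pi : forall k, A k -> 'M[algC]_(d k))
          (E : forall k : nat, 'M[algC]_(d k.-1) -> 'M[algC]_(d k)).

Fixpoint XR (b : forall i : 'I_n.+1, A i) (k : nat) : (k < n.+1)%N -> 'M[algC]_(d k) :=
  match k return (k < n.+1)%N -> 'M[algC]_(d k) with
  | 0 => fun h => rho *m Pi (b (Ordinal h))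
  | k'.+1 => fun h => @E k'.+1 (XR b (ltnW h)) *m Pi (b (Ordinal h))
  end.

Fixpoint XL (a : forall i : 'I_n.+1, A i) (k : nat) : (k < n.+1)%N -> 'M[algC]_(d k) :=
  match k return (k < n.+1)%N -> 'M[algC]_(d k) with
  | 0 => fun h => Pi (a (Ordinal h)) *m rho
  | k'.+1 => fun h => Pi (a (Ordinal h)) *m @E k'.+1 (XL a (ltnW h))
  end.

Fixpoint XD (a b : forall i : 'I_n.+1, A i) (k : nat) : (k < n.+1)%N -> 'M[algC]_(d k) :=
  match k return (k < n.+1)%N -> 'M[algC]_(d k) with
  | 0 => fun h => Pi (a (Ordinal h)) *m rho *m Pi (b (Ordinal h))
  | k'.+1 => fun h => Pi (a (Ordinal h)) *m @E k'.+1 (XD a b (ltnW h)) *m Pi (b (Ordinal h))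
  end.

Definition outcomes := {dffun forall i : 'I_n.+1, A i}.

Definition QKD_right (b : outcomes) : algC := \tr (XR b (ltnSn n)).
Definition QKD_left (a : outcomes) : algC := \tr (XL a (ltnSn n)).
Definition QKD_doubled (a b : outcomes) : algC := \tr (XD a b (ltnSn n)).

Definition negR : algC := \sum_(b : outcomes) `|QKD_right b| - 1.
Definition negL : algC := \sum_(a : outcomes) `|QKD_left a| - 1.
Definition negD : algC := \sum_(a : outcomes) \sum_(b : outcomes) `|QKD_doubled a b| - 1.

End KD.

Definition process (n : nat) (d : nat -> nat) (A : nat -> finType)
  (rho : 'M[algC]_(d 0)) (Pi : forall k, A k -> 'M[algC]_(d k))
  (E : forall k : nat, 'M[algC]_(d k.-1) -> 'M[algC]_(d k)) : Prop :=
  density rho /\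
  (forall k, (0 < k <= n)%N -> CPTP (E k)) /\
  (forall k, (k <= n)%N -> complete_projectors (Pi k)).

(* Main.v *)
Require Import Defs.
From HB Require Import structures.
From mathcomp Require Import all_boot all_order all_algebra all_field.
From mathcomp Require Import ring.
Import Order.TTheory GRing.Theory Num.Theory.
Local Open Scope ring_scope.

Lemma lin_comb (m m' : nat) (F : 'M[algC]_m -> 'M[algC]_m') (l : algC) X Y :
  linear F -> F (l *: X + (1 - l) *: Y) = l *: F X + (1 - l) *: F Y.
Proof.
move=> HF.
have F0 : F 0 = 0.
  have := HF (-1) 0 0; rewrite scaler0 addr0 scaleN1r => H.
  by rewrite {1}H addNr.
rewrite HF; congr (_ + _).
by have := HF (1 - l) Y 0; rewrite !addr0 F0 addr0.
Qed.

Section Lin.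
Variables (n : nat) (d : nat -> nat) (A : nat -> finType).
Variables (rho : 'M[algC]_(d 0)) (Pi : forall k, A k -> 'M[algC]_(d k))
  (E K M : forall k : nat, 'M[algC]_(d k.-1) -> 'M[algC]_(d k))
  (j : nat) (lam : algC).
Hypotheses (Hj : (0 < j <= n)%N)
  (HE : forall k, (0 < k <= n)%N -> linear (E k))
  (HK : forall k, k != j -> K k = E k)
  (HM : forall k, k != j -> M k = E k)
  (HMj : forall X, M j X = lam *: E j X + (1 - lam) *: K j X).

Lemma XR_lin b k (h : (k < n.+1)%N) :
  (XR rho Pi M b h = if (k < j)%N then XR rho Pi E b h
     else lam *: XR rho Pi E b h + (1 - lam) *: XR rho Pi K b h) /\
  ((k < j)%N -> XR rho Pi K b h = XR rho Pi E b h).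
Proof.
elim: k h => [|k IH] h; cbn [XR XL XD].
  by case/andP: Hj => -> _.
have [IH1 IH2] := IH (ltnW h).
case: (ltngtP k.+1 j) => Hk.
- have Hk' : (k < j)%N by apply: ltnW.
  rewrite Hk' in IH1.
  rewrite HM ?HK ?(ltn_eqF Hk) // IH1 IH2 //.
- have Hk' : (k < j)%N = false by rewrite ltnNge -ltnS Hk.
  rewrite Hk' in IH1.
  have Hl : linear (E k.+1) by apply: HE; exact: h.
  split => //.
  rewrite HM ?HK ?(gtn_eqF Hk) // IH1 lin_comb //.
  by rewrite mulmxDl -!scalemxAl.
- subst j; split => //.
  rewrite ltnSn in IH1. rewrite IH1 (IH2 (ltnSn _)) HMj.
  by rewrite mulmxDl -!scalemxAl.
Qed.

Lemma XL_lin b k (h : (k < n.+1)%N) :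
  (XL rho Pi M b h = if (k < j)%N then XL rho Pi E b h
     else lam *: XL rho Pi E b h + (1 - lam) *: XL rho Pi K b h) /\
  ((k < j)%N -> XL rho Pi K b h = XL rho Pi E b h).
Proof.
elim: k h => [|k IH] h; cbn [XR XL XD].
  by case/andP: Hj => -> _.
have [IH1 IH2] := IH (ltnW h).
case: (ltngtP k.+1 j) => Hk.
- have Hk' : (k < j)%N by apply: ltnW.
  rewrite Hk' in IH1.
  rewrite HM ?HK ?(ltn_eqF Hk) // IH1 IH2 //.
- have Hk' : (k < j)%N = false by rewrite ltnNge -ltnS Hk.
  rewrite Hk' in IH1.
  have Hl : linear (E k.+1) by apply: HE; exact: h.
  split => //.
  rewrite HM ?HK ?(gtn_eqF Hk) // IH1 lin_comb //.
  by rewrite mulmxDr -!scalemxAr.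
- subst j; split => //.
  rewrite ltnSn in IH1. rewrite IH1 (IH2 (ltnSn _)) HMj.
  by rewrite mulmxDr -!scalemxAr.
Qed.

Lemma XD_lin a b k (h : (k < n.+1)%N) :
  (XD rho Pi M a b h = if (k < j)%N then XD rho Pi E a b h
     else lam *: XD rho Pi E a b h + (1 - lam) *: XD rho Pi K a b h) /\
  ((k < j)%N -> XD rho Pi K a b h = XD rho Pi E a b h).
Proof.
elim: k h => [|k IH] h; cbn [XR XL XD].
  by case/andP: Hj => -> _.
have [IH1 IH2] := IH (ltnW h).
case: (ltngtP k.+1 j) => Hk.
- have Hk' : (k < j)%N by apply: ltnW.
  rewrite Hk' in IH1.
  rewrite HM ?HK ?(ltn_eqF Hk) // IH1 IH2 //.
- have Hk' : (k < j)%N = false by rewrite ltnNge -ltnS Hk.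
  rewrite Hk' in IH1.
  have Hl : linear (E k.+1) by apply: HE; exact: h.
  split => //.
  rewrite HM ?HK ?(gtn_eqF Hk) // IH1 lin_comb //.
  by rewrite mulmxDr mulmxDl -!scalemxAr -!scalemxAl.
- subst j; split => //.
  rewrite ltnSn in IH1. rewrite IH1 (IH2 (ltnSn _)) HMj.
  by rewrite mulmxDr mulmxDl -!scalemxAr -!scalemxAl.
Qed.

End Lin.

Lemma sum_conv (I : finType) (f g h : I -> algC) (lam : algC) :
  0 <= lam <= 1 -> (forall i, h i = lam * f i + (1 - lam) * g i) ->
  \sum_i `|h i| <= lam * \sum_i `|f i| + (1 - lam) * \sum_i `|g i|.
Proof.
case/andP=> l0 l1 Hh.
rewrite !mulr_sumr -big_split /=; apply: ler_sum => i _.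
rewrite Hh; apply: le_trans (ler_normD _ _) _.
by rewrite !normrM (ger0_norm l0) (@ger0_norm _ (1 - lam)) ?subr_ge0.
Qed.

Lemma conv_m1 (x y z lam : algC) :
  x <= lam * y + (1 - lam) * z -> x - 1 <= lam * (y - 1) + (1 - lam) * (z - 1).
Proof.
move=> H.
have -> : lam * (y - 1) + (1 - lam) * (z - 1) = (lam * y + (1 - lam) * z) - 1.
  by ring.
by rewrite lerD2r.
Qed.

Theorem mainTheorem8 (n : nat) (d : nat -> nat) (A : nat -> finType)
  (rho : 'M[algC]_(d 0)) (Pi : forall k, A k -> 'M[algC]_(d k))
  (E K M : forall k : nat, 'M[algC]_(d k.-1) -> 'M[algC]_(d k))
  (j : nat) (lam : algC) :
  (0 < j <= n)%N ->
  @process n d A rho Pi E ->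
  @process n d A rho Pi K ->
  (forall k, k != j -> K k = E k) ->
  (forall k, k != j -> M k = E k) ->
  (forall X, M j X = lam *: E j X + (1 - lam) *: K j X) ->
  0 <= lam <= 1 ->
  [/\ @negR n d A rho Pi M <= lam * @negR n d A rho Pi E + (1 - lam) * @negR n d A rho Pi K,
      @negL n d A rho Pi M <= lam * @negL n d A rho Pi E + (1 - lam) * @negL n d A rho Pi K &
      @negD n d A rho Pi M <= lam * @negD n d A rho Pi E + (1 - lam) * @negD n d A rho Pi K].
Proof.
move=> Hj [_ [HE _]] _ HK HM HMj Hl.
have HL : forall k, (0 < k <= n)%N -> linear (E k) by move=> k /HE [].
have Hnj : (n < j)%N = false by case/andP: Hj => _ H; rewrite ltnNge H.
split; apply: conv_m1.
- apply: sum_conv => // b.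
  rewrite /QKD_right (proj1 (@XR_lin n d A rho Pi E K M j lam Hj HL HK HM HMj b _ (ltnSn n))) Hnj.
  by rewrite mxtraceD !mxtraceZ.
- apply: sum_conv => // b.
  rewrite /QKD_left (proj1 (@XL_lin n d A rho Pi E K M j lam Hj HL HK HM HMj b _ (ltnSn n))) Hnj.
  by rewrite mxtraceD !mxtraceZ.
- rewrite !pair_bigA; apply: sum_conv => // -[a b] /=.
  rewrite /QKD_doubled (proj1 (@XD_lin n d A rho Pi E K M j lam Hj HL HK HM HMj a b _ (ltnSn n))) Hnj.
  by rewrite mxtraceD !mxtraceZ.
Qed.
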